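(* Let $n\in\mathbb{N}$, $r\in\mathbb{N}_0$, let $u(x,t_r)$ be smooth on $\mathbb{R}^2$, and let polynomials (in $z$, coefficients smooth in $(x,t_r)$) $F_n,H_n$ (degree $n$, leading coefficient $1$), $G_{n-1}$, $\tilde F_r,\tilde H_r$ (degree $r$), $\tilde G_{r-1}$ ($\tilde G_{-1}=0$) satisfy for all $z$: $F_{n,x}=-iu_xF_n-2izG_{n-1}$, $H_{n,x}=iu_xH_n+2izG_{n-1}$, $G_{n-1,x}=i(H_n-F_n)$, $u_{xt_r}=-2i\tilde G_{r-1,x}-2(\tilde H_r-\tilde F_r)$, $\tilde F_{r,x}=-iu_x\tilde F_r-2iz\tilde G_{r-1}$, $\tilde H_{r,x}=iu_x\tilde H_r+2iz\tilde G_{r-1}$, and $z^2G_{n-1}^2+zF_nH_n=R_{2n+1}(z)=\prod_{m=0}^{2n}(z-E_m)$ independent of $(x,t_r)$, where $E_0=0$ and $E_m\neq0$ for $m\ge1$. Then $$F_{n,t_r}=2(G_{n-1}\tilde F_r-\tilde G_{r-1}F_n),\qquad zG_{n-1,t_r}=F_n\tilde H_r-\tilde F_rH_n,\qquad H_{n,t_r}=2(\tilde G_{r-1}H_n-G_{n-1}\tilde H_r),$$ and these three equations are equivalent to $V_{n,t_r}=[\tilde V_r,V_n]$.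
   Context: $V_n(z,x,t_r)=\begin{pmatrix}-G_{n-1}&\frac1zF_n\\ H_n&G_{n-1}\end{pmatrix}$ and $\tilde V_r(z,x,t_r)=\begin{pmatrix}-\tilde G_{r-1}&\frac1z\tilde F_r\\ \tilde H_r&\tilde G_{r-1}\end{pmatrix}$; $[A,B]=AB-BA$. *)

(* Defs.v *)
From Stdlib Require Import Reals List.
From Coquelicot Require Import Coquelicot.

Open Scope C_scope.

(* Iterated partial derivative of a real function of (x, t):
   [true] = d/dx, [false] = d/dt; the head of the list is applied last. *)
Fixpoint pd (w : list bool) (g : R -> R -> R) : R -> R -> R :=
  match w with
  | nil => g
  | true :: w' => fun x t => Derive (fun y => pd w' g y t) x
  | false :: w' => fun x t => Derive (fun s => pd w' g x s) t
  end.

Definition smoothR (g : R -> R -> R) : Prop :=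
  forall (w : list bool) (x t : R),
    ex_derive (fun y => pd w g y t) x /\
    ex_derive (fun s => pd w g x s) t /\
    continuity_2d_pt (pd w g) x t.

Definition smoothC (f : R -> R -> C) : Prop :=
  smoothR (fun x t => Re (f x t)) /\ smoothR (fun x t => Im (f x t)).

Definition dx (f : R -> R -> C) (x t : R) : C :=
  (Derive (fun y => Re (f y t)) x, Derive (fun y => Im (f y t)) x).
Definition dt (f : R -> R -> C) (x t : R) : C :=
  (Derive (fun s => Re (f x s)) t, Derive (fun s => Im (f x s)) t).

(* Polynomial in z with m coefficients c 0, ..., c (m-1) depending on (x,t):
   polyz c m z x t = sum_{k < m} c k x t * z^k   (polyz c 0 = 0). *)
Fixpoint Cpow (z : C) (k : nat) : C :=
  match k with O => 1 | S k' => z * Cpow z k' end.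
Fixpoint polyz (c : nat -> R -> R -> C) (m : nat) (z : C) (x t : R) : C :=
  match m with
  | O => 0
  | S m' => polyz c m' z x t + c m' x t * Cpow z m'
  end.

Fixpoint prodroots (E : nat -> C) (N : nat) (z : C) : C :=
  match N with
  | O => z - E O
  | S N' => prodroots E N' z * (z - E N)
  end.

Record M2 := mkM2 { m11 : C; m12 : C; m21 : C; m22 : C }.
Definition M2mul (A B : M2) : M2 :=
  mkM2 (m11 A * m11 B + m12 A * m21 B) (m11 A * m12 B + m12 A * m22 B)
       (m21 A * m11 B + m22 A * m21 B) (m21 A * m12 B + m22 A * m22 B).
Definition M2sub (A B : M2) : M2 :=
  mkM2 (m11 A - m11 B) (m12 A - m12 B) (m21 A - m21 B) (m22 A - m22 B).
Definition comm2 (A B : M2) : M2 := M2sub (M2mul A B) (M2mul B A).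

Definition Vmat (F G H z : C) : M2 := mkM2 (- G) (F / z) H G.

(* Main.v *)
Require Import Defs.
From Stdlib Require Import Reals List Lia Lra.
From Coquelicot Require Import Coquelicot.
Open Scope C_scope.

Definition CD (f : R -> C) (s : R) : C :=
  (Derive (fun y => Re (f y)) s, Derive (fun y => Im (f y)) s).
Definition CEx (f : R -> C) (s : R) : Prop :=
  ex_derive (fun y => Re (f y)) s /\ ex_derive (fun y => Im (f y)) s.

Lemma exR_plus (f g : R -> R) x : ex_derive f x -> ex_derive g x -> ex_derive (fun y => f y + g y)%R x.
Proof. intros. exact (ex_derive_plus f g x H H0). Qed.
Lemma exR_minus (f g : R -> R) x : ex_derive f x -> ex_derive g x -> ex_derive (fun y => f y - g y)%R x.
Proof. intros. exact (ex_derive_minus f g x H H0). Qed.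
Lemma exR_const (a x : R) : ex_derive (fun _ => a) x.
Proof. exact (ex_derive_const a x). Qed.

Lemma CD_ext f g s : (forall y, f y = g y) -> CD f s = CD g s.
Proof. intros H. unfold CD. f_equal; apply Derive_ext; intros; rewrite H; reflexivity. Qed.
Lemma CEx_ext f g s : (forall y, f y = g y) -> CEx f s -> CEx g s.
Proof. intros H [H1 H2]. split.
  apply (ex_derive_ext (fun y => Re (f y))); auto; intros; rewrite H; reflexivity.
  apply (ex_derive_ext (fun y => Im (f y))); auto; intros; rewrite H; reflexivity. Qed.

Lemma CD_const c s : CD (fun _ => c) s = 0.
Proof. unfold CD. rewrite !Derive_const. reflexivity. Qed.
Lemma CEx_const c s : CEx (fun _ => c) s.
Proof. split; apply exR_const. Qed.

Lemma CD_plus f g s : CEx f s -> CEx g s -> CD (fun y => f y + g y) s = CD f s + CD g s.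
Proof. intros [F1 F2] [G1 G2]. unfold CD.
  rewrite (Derive_ext (fun y => Re (f y + g y)) (fun y => Re (f y) + Re (g y))%R) by reflexivity.
  rewrite (Derive_ext (fun y => Im (f y + g y)) (fun y => Im (f y) + Im (g y))%R) by reflexivity.
  rewrite !Derive_plus; auto. Qed.
Lemma CEx_plus f g s : CEx f s -> CEx g s -> CEx (fun y => f y + g y) s.
Proof. intros [F1 F2] [G1 G2]. split.
  apply (ex_derive_ext (fun y => Re (f y) + Re (g y))%R); [reflexivity| apply exR_plus; auto].
  apply (ex_derive_ext (fun y => Im (f y) + Im (g y))%R); [reflexivity| apply exR_plus; auto].
Qed.
Lemma CD_minus f g s : CEx f s -> CEx g s -> CD (fun y => f y - g y) s = CD f s - CD g s.
Proof. intros [F1 F2] [G1 G2]. unfold CD.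
  rewrite (Derive_ext (fun y => Re (f y - g y)) (fun y => Re (f y) - Re (g y))%R) by (intros; unfold Re, Im; simpl; ring).
  rewrite (Derive_ext (fun y => Im (f y - g y)) (fun y => Im (f y) - Im (g y))%R) by (intros; unfold Re, Im; simpl; ring).
  rewrite !Derive_minus; auto. Qed.
Lemma CEx_minus f g s : CEx f s -> CEx g s -> CEx (fun y => f y - g y) s.
Proof. intros [F1 F2] [G1 G2]. split.
  apply (ex_derive_ext (fun y => Re (f y) - Re (g y))%R); [intros; unfold Re, Im; simpl; ring| apply exR_minus; auto].
  apply (ex_derive_ext (fun y => Im (f y) - Im (g y))%R); [intros; unfold Re, Im; simpl; ring| apply exR_minus; auto].
Qed.
Lemma CD_mult f g s : CEx f s -> CEx g s ->
  CD (fun y => f y * g y) s = CD f s * g s + f s * CD g s.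
Proof. intros [F1 F2] [G1 G2]. unfold CD.
  rewrite (Derive_ext (fun y => Re (f y * g y)) (fun y => Re (f y) * Re (g y) - Im (f y) * Im (g y))%R) by reflexivity.
  rewrite (Derive_ext (fun y => Im (f y * g y)) (fun y => Re (f y) * Im (g y) + Im (f y) * Re (g y))%R) by reflexivity.
  rewrite Derive_minus, Derive_plus, !Derive_mult; auto.
  2,3,4,5: apply ex_derive_mult; auto.
  apply injective_projections; unfold Re, Im; simpl; ring. Qed.
Lemma CEx_mult f g s : CEx f s -> CEx g s -> CEx (fun y => f y * g y) s.
Proof. intros [F1 F2] [G1 G2]. split.
  apply (ex_derive_ext (fun y => Re (f y) * Re (g y) - Im (f y) * Im (g y))%R); [reflexivity|].
  apply exR_minus; apply ex_derive_mult; auto.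
  apply (ex_derive_ext (fun y => Re (f y) * Im (g y) + Im (f y) * Re (g y))%R); [reflexivity|].
  apply exR_plus; apply ex_derive_mult; auto.
Qed.
Lemma CD_RtoC g s : CD (fun y => RtoC (g y)) s = RtoC (Derive g s).
Proof. unfold CD. simpl. rewrite Derive_const. reflexivity. Qed.
Lemma CEx_RtoC g s : ex_derive g s -> CEx (fun y => RtoC (g y)) s.
Proof. intros H. split; simpl; auto. apply exR_const. Qed.

Lemma dx_CD f x t : dx f x t = CD (fun y => f y t) x.
Proof. reflexivity. Qed.
Lemma dt_CD f x t : dt f x t = CD (fun s => f x s) t.
Proof. reflexivity. Qed.

Fixpoint pz (c : nat -> R -> C) (m : nat) (z : C) (y : R) : C :=
  match m with O => 0 | S m' => pz c m' z y + c m' y * Cpow z m' end.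

Lemma polyz_pzx c m z x t : polyz c m z x t = pz (fun k y => c k y t) m z x.
Proof. induction m; simpl; auto. rewrite IHm; auto. Qed.
Lemma polyz_pzt c m z x t : polyz c m z x t = pz (fun k s => c k x s) m z t.
Proof. induction m; simpl; auto. rewrite IHm; auto. Qed.

Lemma pz_CD c m z s : (forall k, CEx (c k) s) ->
  CEx (fun y => pz c m z y) s /\ CD (fun y => pz c m z y) s = pz (fun k => CD (c k)) m z s.
Proof. intros Hc. induction m as [|m [IH1 IH2]]; simpl.
  - split. apply CEx_const. apply CD_const.
  - split. apply CEx_plus; auto. apply CEx_mult; auto. apply CEx_const.
    rewrite CD_plus, CD_mult, CD_const; auto. assert (E: CD (pz c m z) s = pz (fun k => CD (c k)) m z s) by exact IH2. rewrite E. ring. apply CEx_const.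
    apply CEx_mult; auto. apply CEx_const.
Qed.

Definition IsPD (P : C -> R -> C) (m : nat) : Prop :=
  exists c : nat -> R -> C, (forall k y, CEx (c k) y) /\
    (forall k y, (m <= k)%nat -> c k y = 0) /\ (forall z y, P z y = pz c m z y).

Lemma pz_ext_lt (c d : nat -> R -> C) m z y : (forall k, (k < m)%nat -> c k y = d k y) -> pz c m z y = pz d m z y.
Proof. induction m; simpl; auto. intros H. rewrite IHm by (intros; apply H; lia). rewrite H by lia. auto. Qed.

Lemma pz_pad (c : nat -> R -> C) m d z y : (forall k, (m <= k)%nat -> c k y = 0) -> pz c (m + d) z y = pz c m z y.
Proof. induction d; intros H. rewrite Nat.add_0_r; auto.
  rewrite Nat.add_succ_r; simpl; rewrite IHd by auto; rewrite H by lia; ring. Qed.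

Lemma pz_add (c d : nat -> R -> C) m z y : pz c m z y + pz d m z y = pz (fun k y => c k y + d k y) m z y.
Proof. induction m; simpl. ring. rewrite <- IHm. ring. Qed.
Lemma pz_scal (f : R -> C) (c : nat -> R -> C) m z y : f y * pz c m z y = pz (fun k y => f y * c k y) m z y.
Proof. induction m; simpl. ring. rewrite <- IHm. ring. Qed.
Lemma pz_shift (d : nat -> R -> C) m z y : z * pz d m z y = pz (fun k y => match k with O => (0:C) | S k' => d k' y end) (S m) z y.
Proof. induction m; simpl. ring. simpl in IHm. rewrite <- IHm. ring. Qed.
Lemma pz_low (c : nat -> R -> C) m z y : pz c (S m) z y = c O y + z * pz (fun k => c (S k)) m z y.
Proof. induction m. simpl. ring. change (pz c (S (S m)) z y) with (pz c (S m) z y + c (S m) y * (z * Cpow z m)).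
  rewrite IHm. simpl. ring. Qed.

Lemma IsPD_pz (c : nat -> R -> C) m : (forall k y, CEx (c k) y) -> IsPD (fun z y => pz c m z y) m.
Proof. intros Hc. exists (fun k y => if Nat.ltb k m then c k y else 0). split; [|split].
  - intros; destruct (Nat.ltb k m); [auto|apply CEx_const].
  - intros; destruct (Nat.ltb_spec k m); [lia|auto].
  - intros; apply pz_ext_lt; intros; destruct (Nat.ltb_spec k m); [auto|lia].
Qed.
Lemma IsPD_ext P Q m : (forall z y, P z y = Q z y) -> IsPD P m -> IsPD Q m.
Proof. intros E [c [H1 [H2 H3]]]. exists c. split; [exact H1|split; [exact H2|]].
  intros z y. rewrite <- E. apply H3. Qed.
Lemma IsPD_mono P m m' : IsPD P m -> (m <= m')%nat -> IsPD P m'.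
Proof. intros [c [H1 [H2 H3]]] Hm. exists c; split; [auto|split].
  intros; apply H2; lia.
  intros z y. rewrite H3. rewrite <- (pz_pad c m (m' - m) z y) by auto.
  replace (m + (m' - m))%nat with m' by lia. reflexivity. Qed.
Lemma IsPD_plus P Q m : IsPD P m -> IsPD Q m -> IsPD (fun z y => P z y + Q z y) m.
Proof. intros [c [H1 [H2 H3]]] [d [G1 [G2 G3]]]. exists (fun k y => c k y + d k y).
  split; [|split]. intros; apply CEx_plus; auto. intros; rewrite H2, G2; auto; ring.
  intros; rewrite H3, G3, pz_add; auto. Qed.
Lemma IsPD_scal (f : R -> C) P m : (forall y, CEx f y) -> IsPD P m -> IsPD (fun z y => f y * P z y) m.
Proof. intros Hf [c [H1 [H2 H3]]]. exists (fun k y => f y * c k y).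
  split; [|split]. intros; apply CEx_mult; auto. intros; rewrite H2; auto; ring.
  intros; rewrite H3, pz_scal; auto. Qed.
Lemma IsPD_cscal (a : C) P m : IsPD P m -> IsPD (fun z y => a * P z y) m.
Proof. intros. apply (IsPD_scal (fun _ => a)); auto. intros; apply CEx_const. Qed.
Lemma IsPD_minus P Q m : IsPD P m -> IsPD Q m -> IsPD (fun z y => P z y - Q z y) m.
Proof. intros HP HQ. apply (IsPD_ext (fun z y => P z y + (-1) * Q z y)). intros; ring.
  apply IsPD_plus; auto. apply IsPD_cscal; auto. Qed.
Lemma IsPD_z P m : IsPD P m -> IsPD (fun z y => z * P z y) (S m).
Proof. intros [c [H1 [H2 H3]]]. exists (fun k y => match k with O => (0:C) | S k' => c k' y end).
  split; [|split]. intros [|k] y; auto. apply CEx_const.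
  intros [|k] y Hk; auto. apply H2; lia.
  intros; rewrite H3, pz_shift; auto. Qed.
Lemma IsPD_zpow k P m : IsPD P m -> IsPD (fun z y => Cpow z k * P z y) (k + m).
Proof. intros HP. induction k; simpl.
  apply (IsPD_ext P); auto. intros; ring.
  apply (IsPD_ext (fun z y => z * (Cpow z k * P z y))). intros; ring. apply IsPD_z; auto. Qed.
Lemma IsPD_const (f : R -> C) : (forall y, CEx f y) -> IsPD (fun z y => f y) 1.
Proof. intros Hf. exists (fun k y => match k with O => f y | S _ => 0 end).
  split; [|split]. intros [|k] y; auto. apply CEx_const.
  intros [|k] y Hk; auto. lia. intros; simpl; ring. Qed.
Lemma IsPD_cconst (a : C) : IsPD (fun z y => a) 1.
Proof. apply (IsPD_const (fun _ => a)). intros; apply CEx_const. Qed.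
Lemma IsPD_zero : IsPD (fun _ _ => 0) 0.
Proof. exists (fun _ _ => 0). split; [|split]; auto. intros; apply CEx_const. Qed.
Lemma IsPD_0 P : IsPD P 0 -> forall z y, P z y = 0.
Proof. intros [c [H1 [H2 H3]]] z y. rewrite H3. reflexivity. Qed.

Lemma IsPD_mult P Q m m' : IsPD P m -> IsPD Q m' -> IsPD (fun z y => P z y * Q z y) (m + m' - 1).
Proof. intros [c [H1 [H2 H3]]] HQ. destruct m' as [|m'].
  - apply (IsPD_mono _ 0). 2: lia. apply (IsPD_ext (fun _ _ => 0)). intros z y; cbv beta; rewrite (IsPD_0 Q HQ); ring.
    apply IsPD_zero.
  - apply (IsPD_ext (fun z y => pz c m z y * Q z y)). intros z y; cbv beta; rewrite H3; auto.
    clear H2 H3. induction m as [|j IH].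
    + apply (IsPD_mono _ 0). 2: lia. apply (IsPD_ext (fun _ _ => 0)). intros; simpl; ring. apply IsPD_zero.
    + apply (IsPD_ext (fun z y => pz c j z y * Q z y + c j y * (Cpow z j * Q z y))).
      intros; simpl; ring.
      apply IsPD_plus. apply (IsPD_mono _ _ _ IH); lia.
      apply IsPD_scal; auto. apply (IsPD_mono _ (j + S m')). apply IsPD_zpow; auto. lia.
Qed.

Fixpoint bnd (c : nat -> R -> C) (m : nat) (y : R) : R :=
  match m with O => 0%R | S m' => (bnd c m' y + Cmod (c m' y))%R end.

Lemma Cpow_bound z k : (Cmod z <= 1)%R -> (Cmod (Cpow z k) <= 1)%R.
Proof. intros Hz. induction k; simpl. rewrite Cmod_1; lra.
  rewrite Cmod_mult. pose proof (Cmod_ge_0 z). pose proof (Cmod_ge_0 (Cpow z k)). nra. Qed.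

Lemma pz_bound (c : nat -> R -> C) m z y : (Cmod z <= 1)%R -> (Cmod (pz c m z y) <= bnd c m y)%R.
Proof. intros Hz. induction m; simpl. rewrite Cmod_0; lra.
  eapply Rle_trans. apply Cmod_triangle. rewrite Cmod_mult.
  pose proof (Cpow_bound z m Hz). pose proof (Cmod_ge_0 (c m y)). pose proof (Cmod_ge_0 (Cpow z m)). nra. Qed.

Lemma bnd_ge0 (c : nat -> R -> C) m y : (0 <= bnd c m y)%R.
Proof. induction m; simpl. lra. pose proof (Cmod_ge_0 (c m y)); lra. Qed.

Lemma pz_zero m : forall (c : nat -> R -> C) y, (forall z : C, z <> 0 -> pz c m z y = 0) -> forall k, (k < m)%nat -> c k y = 0.
Proof. induction m; intros c y H k Hk. lia.
  set (K := bnd (fun k => c (S k)) m y).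
  assert (H0 : c O y = 0).
  { apply Cmod_eq_0. set (a := Cmod (c O y)). pose proof (Cmod_ge_0 (c O y)).
    destruct (Rle_lt_dec a 0) as [Ha|Ha]. fold a in H0. lra.
    exfalso. pose proof (bnd_ge0 (fun k => c (S k)) m y) as HK. fold K in HK.
    set (e := (a / (a + K + 1))%R).
    assert (He0 : (0 < e)%R) by (unfold e; apply Rdiv_lt_0_compat; lra).
    assert (He1 : (e <= 1)%R) by (unfold e; apply Rmult_le_reg_r with (a + K + 1)%R; [lra|];
       unfold Rdiv; rewrite Rmult_assoc, Rinv_l by lra; lra).
    assert (Hz : RtoC e <> 0). { intros E. injection E. lra. }
    specialize (H _ Hz). rewrite pz_low in H.
    assert (E1 : c O y = - (RtoC e * pz (fun k => c (S k)) m (RtoC e) y)).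
    { set (X := RtoC e * pz (fun k => c (S k)) m (RtoC e) y) in *.
      replace (c O y) with ((c O y + X) - X) by ring. rewrite H. ring. }
    assert (Hb : (Cmod (pz (fun k => c (S k)) m (RtoC e) y) <= K)%R).
    { apply pz_bound. rewrite Cmod_R, Rabs_right; lra. }
    assert (Ha2 : (a <= e * K)%R).
    { unfold a. rewrite E1. rewrite Cmod_opp, Cmod_mult, Cmod_R, Rabs_right by lra.
      apply Rmult_le_compat_l; lra. }
    assert (Ha3 : (a * (a + K + 1) <= a * K)%R).
    { unfold e in Ha2. apply Rmult_le_reg_r with (/ (a + K + 1))%R.
      apply Rinv_0_lt_compat; lra. rewrite Rmult_assoc, Rinv_r by lra.
      replace (a * K * / (a + K + 1))%R with (a / (a + K + 1) * K)%R by (unfold Rdiv; ring). lra. }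
    nra. }
  assert (IHc : forall k, (k < m)%nat -> c (S k) y = 0).
  { intros k' Hk'. apply (IHm (fun k => c (S k)) y); auto. intros z Hz. specialize (H z Hz). rewrite pz_low, H0 in H.
    assert (E : z * pz (fun k => c (S k)) m z y = 0) by (rewrite <- H; ring).
    replace (pz (fun k => c (S k)) m z y) with ((z * pz (fun k => c (S k)) m z y) / z) by (field; auto).
    rewrite E. unfold Cdiv. ring. }
  destruct k. auto. apply IHc. lia.
Qed.

Lemma pz_eq_coef (a b : nat -> R -> C) m y : (forall z : C, z <> 0 -> pz a m z y = pz b m z y) ->
  (forall k, (m <= k)%nat -> a k y = 0) -> (forall k, (m <= k)%nat -> b k y = 0) ->
  forall k, a k y = b k y.
Proof. intros H Ha Hb k. destruct (Nat.lt_ge_cases k m).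
  - assert (E : (fun k y => a k y + (-1) * b k y) k y = 0).
    { apply (pz_zero m (fun k y => a k y + (-1) * b k y) y); auto. intros z Hz. rewrite <- pz_add, <- (pz_scal (fun _ => -1)), H by auto. ring. }
    simpl in E. replace (a k y) with ((a k y + (-1) * b k y) + b k y) by ring. rewrite E. ring.
  - rewrite Ha, Hb; auto.
Qed.

Lemma CD_zero (f : R -> C) s : (forall y, f y = 0) -> CD f s = 0.
Proof. intros H. rewrite (CD_ext f (fun _ => 0)); auto. apply CD_const. Qed.

Lemma Ci_mul_0 (w : C) : Ci * w = 0 -> w = 0.
Proof. destruct w as [w1 w2]. intros H. unfold Ci, Cmult in H. simpl in H.
  injection H. intros. apply injective_projections; simpl; lra. Qed.

Lemma Cpow_add z k l : Cpow z (k + l) = Cpow z k * Cpow z l.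
Proof. induction k; simpl. ring. rewrite IHk. ring. Qed.

Lemma pz_zero_fun m z y : pz (fun _ _ => 0) m z y = 0.
Proof. induction m; simpl. auto. rewrite IHm. ring. Qed.

Lemma IsPD_opp P m : IsPD P m -> IsPD (fun z y => - P z y) m.
Proof. intros HP. apply (IsPD_ext (fun z y => (-1) * P z y)). intros; ring. apply IsPD_cscal; auto. Qed.

Lemma descend (a b c : nat -> R -> C) (ux : R -> C) (F G H : C -> R -> C) (n M : nat) :
  (forall k y, CEx (a k) y) -> (forall k y, CEx (b k) y) -> (forall k y, CEx (c k) y) ->
  (forall k y, (M <= k)%nat -> a k y = 0 /\ b k y = 0 /\ c k y = 0) ->
  (forall k y, CD (a k) y = - Ci * ux y * a k y - 2 * Ci * b k y) ->
  (forall k y, CD (b (S k)) y = Ci * (c k y - a k y)) ->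
  IsPD G n -> IsPD (fun z y => F z y - Cpow z n) n -> IsPD (fun z y => H z y - Cpow z n) n ->
  (forall (z : C) y, z <> 0 -> 2 * G z y * pz b M z y + H z y * pz a M z y + F z y * pz c M z y = 0) ->
  forall k y, a k y = 0 /\ b k y = 0 /\ c k y = 0.
Proof.
  intros Ea Eb Ec HM Oa Ob HG HF HH Hcon.
  set (Q := fun N => forall k y, (N <= k)%nat -> a k y = 0 /\ c k y = 0 /\ b (S k) y = 0).
  assert (HFf : IsPD F (S n)).
  { apply (IsPD_ext (fun z y => (F z y - Cpow z n) + Cpow z n * 1)). intros; ring.
    apply IsPD_plus. apply (IsPD_mono _ _ _ HF); lia.
    replace (S n) with (n + 1)%nat by lia. apply IsPD_zpow, IsPD_cconst. }
  assert (HHf : IsPD H (S n)).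
  { apply (IsPD_ext (fun z y => (H z y - Cpow z n) + Cpow z n * 1)). intros; ring.
    apply IsPD_plus. apply (IsPD_mono _ _ _ HH); lia.
    replace (S n) with (n + 1)%nat by lia. apply IsPD_zpow, IsPD_cconst. }
  assert (step : forall N, Q (S N) -> Q N).
  { intros N HQ.
    assert (hb : forall y, b (S N) y = 0).
    { intros y. pose proof (Oa (S N) y) as E. rewrite CD_zero in E.
      2: intros y'; apply (HQ (S N) y'); lia.
      rewrite (proj1 (HQ (S N) y (le_n _))) in E.
      apply Ci_mul_0. replace (Ci * b (S N) y) with ((-1/2) * (- Ci * ux y * 0 - 2 * Ci * b (S N) y)) by (field).
      rewrite <- E. ring. }
    assert (hca : forall y, c N y = a N y).
    { intros y. pose proof (Ob N y) as E. rewrite CD_zero in E by auto.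
      symmetry in E. apply Ci_mul_0 in E.
      replace (c N y) with ((c N y - a N y) + a N y) by ring. rewrite E. ring. }
    assert (ha : forall y, a N y = 0).
    { intros y. destruct (Nat.lt_ge_cases N M) as [HNM|HNM].
      2: apply (HM N y HNM).
      assert (Za : forall k, (S N <= k)%nat -> a k y = 0) by (intros; apply (HQ k y); lia).
      assert (Zc : forall k, (S N <= k)%nat -> c k y = 0) by (intros; apply (HQ k y); lia).
      assert (Zb : forall k, (S N <= k)%nat -> b k y = 0).
      { intros [|k] Hk. lia. destruct (Nat.eq_dec k N). subst; auto. apply (HQ k y); lia. }
      assert (Pa : forall z, pz a M z y = pz a N z y + a N y * Cpow z N).
      { intros z. replace M with (S N + (M - S N))%nat by lia. rewrite pz_pad; auto. }
      assert (Pc : forall z, pz c M z y = pz c N z y + a N y * Cpow z N).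
      { intros z. replace M with (S N + (M - S N))%nat by lia. rewrite pz_pad; auto.
        simpl. rewrite hca. auto. }
      assert (Pb : forall z, pz b M z y = pz b (S N) z y).
      { intros z. replace M with (S N + (M - S N))%nat by lia. rewrite pz_pad; auto. }
      set (Qf := fun z y => - (2 * G z y * pz b (S N) z y + H z y * pz a N z y + F z y * pz c N z y
                 + a N y * (Cpow z N * ((H z y - Cpow z n) + (F z y - Cpow z n))))).
      assert (HQf : IsPD Qf (n + N)).
      { unfold Qf. apply IsPD_opp. apply IsPD_plus. apply IsPD_plus. apply IsPD_plus.
        - apply (IsPD_ext (fun z y => 2 * (G z y * pz b (S N) z y))). intros; ring.
          apply IsPD_cscal. apply (IsPD_mono _ (n + S N - 1)). apply IsPD_mult; auto. apply IsPD_pz; auto. lia.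
        - apply (IsPD_mono _ (S n + N - 1)). apply IsPD_mult; auto. apply IsPD_pz; auto. lia.
        - apply (IsPD_mono _ (S n + N - 1)). apply IsPD_mult; auto. apply IsPD_pz; auto. lia.
        - apply IsPD_scal; auto. rewrite Nat.add_comm. apply IsPD_zpow. apply IsPD_plus; auto. }
      destruct HQf as [q [Q1 [Q2 Q3]]].
      set (r := fun k (y : R) => if Nat.eqb k (n + N) then 2 * a N y else 0).
      assert (Er : forall z : C, z <> 0 -> pz q (S (n + N)) z y = pz r (S (n + N)) z y).
      { intros z Hz. simpl. rewrite Q2 by lia. rewrite <- Q3.
        rewrite (pz_ext_lt r (fun _ _ => 0)). 2: { intros k Hk. unfold r. destruct (Nat.eqb_spec k (n + N)); auto; lia. }
        rewrite pz_zero_fun. unfold r. rewrite Nat.eqb_refl. unfold Qf.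
        specialize (Hcon z y Hz). rewrite Pa, Pb, Pc in Hcon. rewrite Cpow_add.
        replace (2 * a N y * (Cpow z n * Cpow z N)) with
          (2 * a N y * (Cpow z n * Cpow z N) - (2 * G z y * pz b (S N) z y + H z y * (pz a N z y + a N y * Cpow z N) +
       F z y * (pz c N z y + a N y * Cpow z N))) by (rewrite Hcon; ring).
        ring. }
      pose proof (pz_eq_coef q r (S (n + N)) y Er) as E.
      assert (E2 : q (n + N)%nat y = r (n + N)%nat y).
      { apply E. intros; apply Q2; lia. intros k Hk. unfold r. destruct (Nat.eqb_spec k (n + N)); auto; lia. }
      rewrite Q2 in E2 by lia. unfold r in E2. rewrite Nat.eqb_refl in E2.
      replace (a N y) with ((1/2) * (2 * a N y)) by field. rewrite <- E2. ring. }
    intros k y Hk. destruct (Nat.eq_dec k N).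
    - subst. rewrite hca, ha. auto.
    - apply HQ; lia. }
  assert (all : forall d N, (M <= N + d)%nat -> Q N).
  { induction d; intros N HN.
    - intros k y Hk. destruct (HM k y) as [h1 [h2 h3]]. lia. destruct (HM (S k) y) as [g1 [g2 g3]]. lia. auto.
    - destruct (Nat.le_gt_cases M (N + d)). apply IHd; auto. apply step, IHd. lia. }
  assert (Q0 : Q O) by (apply (all M); lia).
  intros k y. destruct (Q0 k y) as [h1 [h2 h3]]. lia.
  split; auto. split; auto. destruct k as [|k]. 2: destruct (Q0 k y) as [_ [_ h]]; [lia|auto].
  pose proof (Oa O y) as E. rewrite CD_zero in E. 2: intros y'; apply (Q0 O y'); lia.
  rewrite h1 in E.
  apply Ci_mul_0. replace (Ci * b O y) with ((-1/2) * (- Ci * ux y * 0 - 2 * Ci * b O y)) by (field).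
  rewrite <- E. ring.
Qed.

Ltac cex1 := match goal with
 | |- CEx (fun _ => ?c) ?s => apply (CEx_const c s)
 | |- CEx (fun y => @?f y - @?g y) ?s => apply (CEx_minus f g s)
 | |- CEx (fun y => @?f y + @?g y) ?s => apply (CEx_plus f g s)
 | |- CEx (fun y => @?f y * @?g y) ?s => apply (CEx_mult f g s)
 | |- CEx (fun y => RtoC (@?f y)) ?s => apply (CEx_RtoC f s)
 | _ => assumption
 end.
Ltac cex := repeat cex1.

Lemma CD_shA (P Q R0 S T : R -> C) s : CEx P s -> CEx Q s -> CEx R0 s -> CEx S s -> CEx T s ->
  CD (fun y => P y - 2 * (Q y * R0 y - S y * T y)) s
  = CD P s - 2 * ((CD Q s * R0 s + Q s * CD R0 s) - (CD S s * T s + S s * CD T s)).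
Proof. intros. rewrite (CD_minus P (fun y => 2 * (Q y * R0 y - S y * T y))) by cex.
  rewrite (CD_mult (fun _ => 2) (fun y => Q y * R0 y - S y * T y)) by cex.
  rewrite (CD_minus (fun y => Q y * R0 y) (fun y => S y * T y)) by cex.
  rewrite (CD_mult Q R0), (CD_mult S T), CD_const by cex. ring. Qed.

Lemma CD_shB (P Q R0 S T : R -> C) (z : C) s : CEx P s -> CEx Q s -> CEx R0 s -> CEx S s -> CEx T s ->
  CD (fun y => z * P y - (Q y * R0 y - S y * T y)) s
  = z * CD P s - ((CD Q s * R0 s + Q s * CD R0 s) - (CD S s * T s + S s * CD T s)).
Proof. intros. rewrite (CD_minus (fun y => z * P y) (fun y => Q y * R0 y - S y * T y)) by cex.
  rewrite (CD_mult (fun _ => z) P) by cex.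
  rewrite (CD_minus (fun y => Q y * R0 y) (fun y => S y * T y)) by cex.
  rewrite (CD_mult Q R0), (CD_mult S T), CD_const by cex. ring. Qed.

Lemma CD_shT (g : R -> R) (P Q : R -> C) (z : C) s : ex_derive g s -> CEx P s -> CEx Q s ->
  CD (fun y => - Ci * RtoC (g y) * P y - 2 * Ci * z * Q y) s
  = - Ci * RtoC (Derive g s) * P s - Ci * RtoC (g s) * CD P s - 2 * Ci * z * CD Q s.
Proof. intros. rewrite (CD_minus (fun y => - Ci * RtoC (g y) * P y) (fun y => 2 * Ci * z * Q y)) by cex.
  rewrite (CD_mult (fun y => - Ci * RtoC (g y)) P) by cex.
  rewrite (CD_mult (fun _ => - Ci) (fun y => RtoC (g y))) by cex.
  rewrite (CD_mult (fun _ => 2 * Ci * z) Q) by cex.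
  rewrite !CD_const, CD_RtoC. ring. Qed.

Lemma CD_shG (P Q : R -> C) s : CEx P s -> CEx Q s ->
  CD (fun y => Ci * (P y - Q y)) s = Ci * (CD P s - CD Q s).
Proof. intros. rewrite (CD_mult (fun _ => Ci) (fun y => P y - Q y)) by cex.
  rewrite (CD_minus P Q), CD_const by cex. ring. Qed.

Lemma CD_shR (P Q S : R -> C) (z : C) s : CEx P s -> CEx Q s -> CEx S s ->
  CD (fun y => z * z * (P y * P y) + z * Q y * S y) s
  = z * z * (CD P s * P s + P s * CD P s) + (z * CD Q s * S s + z * Q s * CD S s).
Proof. intros. rewrite (CD_plus (fun y => z * z * (P y * P y)) (fun y => z * Q y * S y)) by cex.
  rewrite (CD_mult (fun _ => z * z) (fun y => P y * P y)) by cex.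
  rewrite (CD_mult P P) by cex.
  rewrite (CD_mult (fun y => z * Q y) S) by cex.
  rewrite (CD_mult (fun _ => z) Q) by cex.
  rewrite !CD_const. ring. Qed.

Lemma Ci2 : Ci * Ci = -1. Proof. apply injective_projections; simpl; ring. Qed.

Lemma algA (F G H Ft Gt f g h ux z gx : C) :
  (- Ci * (- 2 * Ci * gx - 2 * (h - f)) * F - Ci * ux * Ft - 2 * Ci * z * Gt)
  - 2 * ((Ci * (H - F) * f + G * (- Ci * ux * f - 2 * Ci * z * g))
         - (gx * F + g * (- Ci * ux * F - 2 * Ci * z * G)))
  = - Ci * ux * (Ft - 2 * (G * f - g * F)) - 2 * Ci * (z * Gt - (F * h - f * H)).
Proof. ring [Ci2]. Qed.

Lemma algB (F G H Ft Ht f g h ux z : C) :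
  z * (Ci * (Ht - Ft))
  - (((- Ci * ux * F - 2 * Ci * z * G) * h + F * (Ci * ux * h + 2 * Ci * z * g))
     - ((- Ci * ux * f - 2 * Ci * z * g) * H + f * (Ci * ux * H + 2 * Ci * z * G)))
  = Ci * z * ((Ht - 2 * (g * H - G * h)) - (Ft - 2 * (G * f - g * F))).
Proof. ring [Ci2]. Qed.

Lemma smooth_cx f x t : smoothC f -> CEx (fun y => f y t) x.
Proof. intros [H1 H2]. split. exact (proj1 (H1 nil x t)). exact (proj1 (H2 nil x t)). Qed.
Lemma smooth_ct f x t : smoothC f -> CEx (fun s => f x s) t.
Proof. intros [H1 H2]. split. exact (proj1 (proj2 (H1 nil x t))). exact (proj1 (proj2 (H2 nil x t))). Qed.
Lemma smooth_dtx f x t : smoothC f -> CEx (fun y => dt f y t) x.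
Proof. intros [H1 H2]. split. exact (proj1 (H1 (false :: nil) x t)). exact (proj1 (H2 (false :: nil) x t)). Qed.
Lemma smooth_dxt f x t : smoothC f -> CEx (fun s => dx f x s) t.
Proof. intros [H1 H2]. split. exact (proj1 (proj2 (H1 (true :: nil) x t))). exact (proj1 (proj2 (H2 (true :: nil) x t))). Qed.

Lemma smoothR_schwarz g x t : smoothR g ->
  Derive (fun y => Derive (fun s => g y s) t) x = Derive (fun s => Derive (fun y => g y s) x) t.
Proof. intros H. apply Schwarz.
  - exists (mkposreal 1 Rlt_0_1). intros u v _ _. split; [|split; [|split]].
    exact (proj1 (H nil u v)). exact (proj1 (proj2 (H nil u v))).
    exact (proj1 (H (false :: nil) u v)). exact (proj1 (proj2 (H (true :: nil) u v))).
  - exact (proj2 (proj2 (H (true :: false :: nil) x t))).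
  - exact (proj2 (proj2 (H (false :: true :: nil) x t))).
Qed.

Lemma smooth_schwarz f x t : smoothC f -> CD (fun y => dt f y t) x = CD (fun s => dx f x s) t.
Proof. intros [H1 H2]. unfold CD. f_equal.
  exact (smoothR_schwarz _ x t H1). exact (smoothR_schwarz _ x t H2). Qed.

Lemma polyz_ext (c d : nat -> R -> R -> C) m z x t : (forall k, c k x t = d k x t) ->
  polyz c m z x t = polyz d m z x t.
Proof. intros H. induction m; simpl; auto. rewrite IHm, H. auto. Qed.

Lemma polyz_dx' (c : nat -> R -> R -> C) m z x t : (forall k, CEx (fun y => c k y t) x) ->
  CEx (fun y => polyz c m z y t) x /\ dx (polyz c m z) x t = polyz (fun k => dx (c k)) m z x t.
Proof. intros Hc. destruct (pz_CD (fun k y => c k y t) m z x Hc) as [E1 E2]. split.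
  - apply (CEx_ext (fun y => pz (fun k y => c k y t) m z y)); auto. intros; symmetry; apply polyz_pzx.
  - rewrite dx_CD. rewrite (CD_ext _ (fun y => pz (fun k y => c k y t) m z y)) by (intros; apply polyz_pzx).
    rewrite E2. rewrite polyz_pzx. reflexivity.
Qed.
Lemma polyz_dt' (c : nat -> R -> R -> C) m z x t : (forall k, CEx (fun s => c k x s) t) ->
  CEx (fun s => polyz c m z x s) t /\ dt (polyz c m z) x t = polyz (fun k => dt (c k)) m z x t.
Proof. intros Hc. destruct (pz_CD (fun k s => c k x s) m z t Hc) as [E1 E2]. split.
  - apply (CEx_ext (fun s => pz (fun k s => c k x s) m z s)); auto. intros; symmetry; apply polyz_pzt.
  - rewrite dt_CD. rewrite (CD_ext _ (fun s => pz (fun k s => c k x s) m z s)) by (intros; apply polyz_pzt).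
    rewrite E2. rewrite polyz_pzt. reflexivity.
Qed.

Lemma polyz_schwarz (c : nat -> R -> R -> C) m z x t : (forall k, smoothC (c k)) ->
  CD (fun y => dt (polyz c m z) y t) x = CD (fun s => dx (polyz c m z) x s) t.
Proof. intros Hc.
  rewrite (CD_ext _ (fun y => polyz (fun k => dt (c k)) m z y t)).
  2: { intros y. apply polyz_dt'. intros; apply smooth_ct; auto. }
  rewrite (CD_ext (fun s => dx (polyz c m z) x s) (fun s => polyz (fun k => dx (c k)) m z x s)).
  2: { intros s. apply polyz_dx'. intros; apply smooth_cx; auto. }
  rewrite <- dx_CD, <- dt_CD.
  rewrite (proj2 (polyz_dx' (fun k => dt (c k)) m z x t (fun k => smooth_dtx _ x t (Hc k)))).
  rewrite (proj2 (polyz_dt' (fun k => dx (c k)) m z x t (fun k => smooth_dxt _ x t (Hc k)))).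
  apply polyz_ext. intros k. rewrite dx_CD, dt_CD. apply smooth_schwarz; auto.
Qed.

Definition Aexp (Fc Gc Ftc Gtc : nat -> R -> R -> C) (n r : nat) (z : C) (x t : R) : C :=
  dt (polyz Fc (S n) z) x t - 2 * (polyz Gc n z x t * polyz Ftc (S r) z x t - polyz Gtc r z x t * polyz Fc (S n) z x t).
Definition Bexp (Fc Gc Hc Ftc Htc : nat -> R -> R -> C) (n r : nat) (z : C) (x t : R) : C :=
  z * dt (polyz Gc n z) x t - (polyz Fc (S n) z x t * polyz Htc (S r) z x t - polyz Ftc (S r) z x t * polyz Hc (S n) z x t).
Definition Cexp (Gc Hc Gtc Htc : nat -> R -> R -> C) (n r : nat) (z : C) (x t : R) : C :=
  dt (polyz Hc (S n) z) x t - 2 * (polyz Gtc r z x t * polyz Hc (S n) z x t - polyz Gc n z x t * polyz Htc (S r) z x t).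

Lemma algR (F G H Ft Gt Ht f g h z : C) :
  z * (2 * G * (z * Gt - (F * h - f * H)) + H * (Ft - 2 * (G * f - g * F)) + F * (Ht - 2 * (g * H - G * h)))
  = z * z * (Gt * G + G * Gt) + (z * Ft * H + z * F * Ht).
Proof. ring. Qed.

Lemma Cmul_cancel (z w : C) : z <> 0 -> z * w = 0 -> w = 0.
Proof. intros Hz H. replace w with ((z * w) / z) by (field; auto). rewrite H. unfold Cdiv. ring. Qed.

Lemma pz_lin2 (p q : R -> C) (a b : nat -> R -> C) m z y :
  pz (fun k y => p y * a k y - q y * b k y) m z y = p y * pz a m z y - q y * pz b m z y.
Proof. induction m; simpl. ring. rewrite IHm. ring. Qed.
Lemma pz_cdiff (w : C) (c a : nat -> R -> C) m z y :
  pz (fun k y => w * (c k y - a k y)) m z y = w * (pz c m z y - pz a m z y).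
Proof. induction m; simpl. ring. rewrite IHm. ring. Qed.
Lemma Csub0 (X Y : C) : X - Y = 0 -> X = Y.
Proof. intros H. replace X with ((X - Y) + Y) by ring. rewrite H. ring. Qed.

Lemma key (n r : nat) (u : R -> R -> R)
  (Fc Gc Hc Ftc Gtc Htc : nat -> R -> R -> C) (E : nat -> C) :
  smoothR u ->
  (forall k, smoothC (Fc k)) -> (forall k, smoothC (Gc k)) ->
  (forall k, smoothC (Hc k)) -> (forall k, smoothC (Ftc k)) ->
  (forall k, smoothC (Gtc k)) -> (forall k, smoothC (Htc k)) ->
  (forall x t, Fc n x t = 1) -> (forall x t, Hc n x t = 1) ->
  (forall z x t,
     dx (polyz Fc (S n) z) x t
       = - Ci * RtoC (Derive (fun y => u y t) x) * polyz Fc (S n) z x t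
         - 2 * Ci * z * polyz Gc n z x t) ->
  (forall z x t,
     dx (polyz Hc (S n) z) x t
       = Ci * RtoC (Derive (fun y => u y t) x) * polyz Hc (S n) z x t
         + 2 * Ci * z * polyz Gc n z x t) ->
  (forall z x t,
     dx (polyz Gc n z) x t = Ci * (polyz Hc (S n) z x t - polyz Fc (S n) z x t)) ->
  (forall z x t,
     RtoC (Derive (fun s => Derive (fun y => u y s) x) t)
       = - 2 * Ci * dx (polyz Gtc r z) x t
         - 2 * (polyz Htc (S r) z x t - polyz Ftc (S r) z x t)) ->
  (forall z x t,
     dx (polyz Ftc (S r) z) x t
       = - Ci * RtoC (Derive (fun y => u y t) x) * polyz Ftc (S r) z x t
         - 2 * Ci * z * polyz Gtc r z x t) ->
  (forall z x t,
     dx (polyz Htc (S r) z) x t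
       = Ci * RtoC (Derive (fun y => u y t) x) * polyz Htc (S r) z x t
         + 2 * Ci * z * polyz Gtc r z x t) ->
  (forall z x t,
     z * z * (polyz Gc n z x t * polyz Gc n z x t)
       + z * polyz Fc (S n) z x t * polyz Hc (S n) z x t
       = prodroots E (2 * n) z) ->
  forall t z x, Aexp Fc Gc Ftc Gtc n r z x t = 0 /\ Bexp Fc Gc Hc Ftc Htc n r z x t = 0
    /\ Cexp Gc Hc Gtc Htc n r z x t = 0.
Proof.
  intros Hu HFc HGc HHc HFtc HGtc HHtc HFn HHn hFx hHx hGx hu hfx hhx HR t.
  assert (cx : forall c m z y, (forall k, smoothC (c k)) -> CEx (fun y' => polyz c m z y' t) y).
  { intros. apply polyz_dx'. intros; apply smooth_cx; auto. }
  assert (ct : forall c m z y, (forall k, smoothC (c k)) -> CEx (fun s => polyz c m z y s) t).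
  { intros. apply polyz_dt'. intros; apply smooth_ct; auto. }
  assert (ctx : forall c m z y, (forall k, smoothC (c k)) -> CEx (fun y' => dt (polyz c m z) y' t) y).
  { intros. apply (CEx_ext (fun y' => polyz (fun k => dt (c k)) m z y' t)).
    intros; symmetry; apply polyz_dt'; intros; apply smooth_ct; auto.
    apply polyz_dx'. intros; apply smooth_dtx; auto. }
  assert (ipd : forall c m, (forall k, smoothC (c k)) -> IsPD (fun z y => polyz c m z y t) m).
  { intros. apply (IsPD_ext (fun z y => pz (fun k y => c k y t) m z y)).
    intros; symmetry; apply polyz_pzx. apply IsPD_pz. intros; apply smooth_cx; auto. }
  assert (ipdt : forall c m, (forall k, smoothC (c k)) -> IsPD (fun z y => dt (polyz c m z) y t) m).
  { intros. apply (IsPD_ext (fun z y => pz (fun k y => dt (c k) y t) m z y)).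
    intros z y. rewrite <- (polyz_pzx (fun k => dt (c k)) m z y t). symmetry; apply polyz_dt'; intros; apply smooth_ct; auto.
    apply IsPD_pz. intros; apply smooth_dtx; auto. }
  set (M := S (n + r)).
  assert (IA : IsPD (fun z y => Aexp Fc Gc Ftc Gtc n r z y t) M).
  { unfold Aexp. apply IsPD_minus. apply (IsPD_mono _ (S n)). apply ipdt; auto. unfold M; lia.
    apply IsPD_cscal. apply IsPD_minus.
    apply (IsPD_mono _ (n + S r - 1)). apply IsPD_mult; apply ipd; auto. unfold M; lia.
    apply (IsPD_mono _ (r + S n - 1)). apply IsPD_mult; apply ipd; auto. unfold M; lia. }
  assert (IB : IsPD (fun z y => Bexp Fc Gc Hc Ftc Htc n r z y t) M).
  { unfold Bexp. apply IsPD_minus. apply (IsPD_mono _ (S n)). apply IsPD_z, ipdt; auto. unfold M; lia.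
    apply IsPD_minus.
    apply (IsPD_mono _ (S n + S r - 1)). apply IsPD_mult; apply ipd; auto. unfold M; lia.
    apply (IsPD_mono _ (S r + S n - 1)). apply IsPD_mult; apply ipd; auto. unfold M; lia. }
  assert (IC : IsPD (fun z y => Cexp Gc Hc Gtc Htc n r z y t) M).
  { unfold Cexp. apply IsPD_minus. apply (IsPD_mono _ (S n)). apply ipdt; auto. unfold M; lia.
    apply IsPD_cscal. apply IsPD_minus.
    apply (IsPD_mono _ (r + S n - 1)). apply IsPD_mult; apply ipd; auto. unfold M; lia.
    apply (IsPD_mono _ (n + S r - 1)). apply IsPD_mult; apply ipd; auto. unfold M; lia. }
  assert (OA : forall z y, CD (fun y' => Aexp Fc Gc Ftc Gtc n r z y' t) y
     = - Ci * RtoC (Derive (fun y' => u y' t) y) * Aexp Fc Gc Ftc Gtc n r z y t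
       - 2 * Ci * Bexp Fc Gc Hc Ftc Htc n r z y t).
  { intros z y. unfold Aexp, Bexp.
    rewrite (CD_shA (fun y' => dt (polyz Fc (S n) z) y' t) (fun y' => polyz Gc n z y' t)
      (fun y' => polyz Ftc (S r) z y' t) (fun y' => polyz Gtc r z y' t) (fun y' => polyz Fc (S n) z y' t) y) by auto.
    rewrite polyz_schwarz by auto.
    rewrite (CD_ext (fun s => dx (polyz Fc (S n) z) y s)
      (fun s => - Ci * RtoC (Derive (fun y' => u y' s) y) * polyz Fc (S n) z y s - 2 * Ci * z * polyz Gc n z y s))
      by (intros; apply hFx).
    rewrite (CD_shT (fun s => Derive (fun y' => u y' s) y) (fun s => polyz Fc (S n) z y s)
      (fun s => polyz Gc n z y s) z t).
    2: exact (proj1 (proj2 (Hu (true :: nil) y t))). 2,3: auto.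
    rewrite (hu z y t).
    change (CD (fun s => polyz Fc (S n) z y s) t) with (dt (polyz Fc (S n) z) y t).
    change (CD (fun s => polyz Gc n z y s) t) with (dt (polyz Gc n z) y t).
    change (CD (fun y' => polyz Gc n z y' t) y) with (dx (polyz Gc n z) y t).
    change (CD (fun y' => polyz Ftc (S r) z y' t) y) with (dx (polyz Ftc (S r) z) y t).
    change (CD (fun y' => polyz Gtc r z y' t) y) with (dx (polyz Gtc r z) y t).
    change (CD (fun y' => polyz Fc (S n) z y' t) y) with (dx (polyz Fc (S n) z) y t).
    rewrite hGx, hfx, hFx.
    apply algA. }
  assert (OB : forall z y, CD (fun y' => Bexp Fc Gc Hc Ftc Htc n r z y' t) y
     = Ci * z * (Cexp Gc Hc Gtc Htc n r z y t - Aexp Fc Gc Ftc Gtc n r z y t)).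
  { intros z y. unfold Aexp, Bexp, Cexp.
    rewrite (CD_shB (fun y' => dt (polyz Gc n z) y' t) (fun y' => polyz Fc (S n) z y' t)
      (fun y' => polyz Htc (S r) z y' t) (fun y' => polyz Ftc (S r) z y' t) (fun y' => polyz Hc (S n) z y' t) z y) by auto.
    rewrite polyz_schwarz by auto.
    rewrite (CD_ext (fun s => dx (polyz Gc n z) y s)
      (fun s => Ci * (polyz Hc (S n) z y s - polyz Fc (S n) z y s))) by (intros; apply hGx).
    rewrite (CD_shG (fun s => polyz Hc (S n) z y s) (fun s => polyz Fc (S n) z y s) t) by auto.
    change (CD (fun s => polyz Fc (S n) z y s) t) with (dt (polyz Fc (S n) z) y t).
    change (CD (fun s => polyz Hc (S n) z y s) t) with (dt (polyz Hc (S n) z) y t).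
    change (CD (fun y' => polyz Fc (S n) z y' t) y) with (dx (polyz Fc (S n) z) y t).
    change (CD (fun y' => polyz Htc (S r) z y' t) y) with (dx (polyz Htc (S r) z) y t).
    change (CD (fun y' => polyz Ftc (S r) z y' t) y) with (dx (polyz Ftc (S r) z) y t).
    change (CD (fun y' => polyz Hc (S n) z y' t) y) with (dx (polyz Hc (S n) z) y t).
    rewrite hFx, hhx, hfx, hHx.
    apply algB. }
  destruct IA as [a [Ea [Za Ra]]]. destruct IB as [b [Eb [Zb Rb]]]. destruct IC as [c [Ec [Zc Rc]]].
  cbv beta in Ra, Rb, Rc.
  assert (Oa : forall k y, CD (a k) y = - Ci * RtoC (Derive (fun y' => u y' t) y) * a k y - 2 * Ci * b k y).
  { intros k y.
    refine (pz_eq_coef (fun k y => CD (a k) y)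
      (fun k y => - Ci * RtoC (Derive (fun y' => u y' t) y) * a k y - 2 * Ci * b k y) M y _ _ _ k).
    - intros z Hz. transitivity (pz (fun k => CD (a k)) M z y); [reflexivity|].
      rewrite <- (proj2 (pz_CD a M z y (fun k => Ea k y))).
      rewrite <- (CD_ext (fun y' => Aexp Fc Gc Ftc Gtc n r z y' t) (fun y' => pz a M z y') y) by (intros; apply Ra).
      rewrite OA, Ra, Rb. symmetry. apply pz_lin2.
    - intros; cbv beta; apply CD_zero; intros; apply Za; auto.
    - intros; cbv beta; rewrite Za, Zb by auto; ring. }
  assert (Ob : forall k y, CD (b (S k)) y = Ci * (c k y - a k y)).
  { intros k y.
    refine (pz_eq_coef (fun k y => CD (b k) y)
      (fun k y => match k with O => 0 | S k' => Ci * (c k' y - a k' y) end) (S M) y _ _ _ (S k)).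
    - intros z Hz. transitivity (z * pz (fun k y => Ci * (c k y - a k y)) M z y).
      2: apply pz_shift.
      replace (S M) with (M + 1)%nat by lia.
      rewrite pz_pad by (intros; cbv beta; apply CD_zero; intros; apply Zb; lia).
      transitivity (pz (fun k => CD (b k)) M z y); [reflexivity|].
      rewrite <- (proj2 (pz_CD b M z y (fun k => Eb k y))).
      rewrite <- (CD_ext (fun y' => Bexp Fc Gc Hc Ftc Htc n r z y' t) (fun y' => pz b M z y') y) by (intros; apply Rb).
      rewrite OB, Rc, Ra. rewrite (pz_cdiff Ci c a M z y). ring.
    - intros; cbv beta; apply CD_zero; intros; apply Zb; lia.
    - intros [|k'] Hk; [lia|]. cbv beta iota. rewrite Zc, Za by lia. ring. }
  assert (Con : forall (z : C) y, z <> 0 -> 2 * polyz Gc n z y t * pz b M z y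
      + polyz Hc (S n) z y t * pz a M z y + polyz Fc (S n) z y t * pz c M z y = 0).
  { intros z y Hz. rewrite <- Ra, <- Rb, <- Rc. apply (Cmul_cancel z); auto.
    unfold Aexp, Bexp, Cexp. rewrite algR.
    assert (D0 : CD (fun s => z * z * (polyz Gc n z y s * polyz Gc n z y s)
        + z * polyz Fc (S n) z y s * polyz Hc (S n) z y s) t = 0).
    { rewrite (CD_ext _ (fun _ => prodroots E (2 * n) z)) by (intros; apply HR). apply CD_const. }
    rewrite CD_shR in D0 by auto. exact D0. }
  assert (D := descend a b c (fun y => RtoC (Derive (fun y' => u y' t) y))
     (fun z y => polyz Fc (S n) z y t) (fun z y => polyz Gc n z y t) (fun z y => polyz Hc (S n) z y t)
     n M Ea Eb Ec).
  assert (Dz : forall k y, a k y = 0 /\ b k y = 0 /\ c k y = 0).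
  { apply D.
    - intros k y Hk. split; [|split]; auto.
    - exact Oa.
    - exact Ob.
    - apply ipd; auto.
    - apply (IsPD_ext (fun z y => polyz Fc n z y t)). intros z y; cbv beta; change (polyz Fc (S n) z y t) with (polyz Fc n z y t + Fc n y t * Cpow z n); rewrite HFn; ring. apply ipd; auto.
    - apply (IsPD_ext (fun z y => polyz Hc n z y t)). intros z y; cbv beta; change (polyz Hc (S n) z y t) with (polyz Hc n z y t + Hc n y t * Cpow z n); rewrite HHn; ring. apply ipd; auto.
    - exact Con. }
  intros z x. rewrite Ra, Rb, Rc.
  rewrite (pz_ext_lt a (fun _ _ => 0)), (pz_ext_lt b (fun _ _ => 0)), (pz_ext_lt c (fun _ _ => 0)).
  rewrite !pz_zero_fun. auto.
  all: intros k _; apply Dz.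
Qed.

Theorem lemma4p2
  (n r : nat) (u : R -> R -> R)
  (Fc Gc Hc Ftc Gtc Htc : nat -> R -> R -> C) (E : nat -> C) :
  (1 <= n)%nat ->
  smoothR u ->
  (forall k, smoothC (Fc k)) -> (forall k, smoothC (Gc k)) ->
  (forall k, smoothC (Hc k)) -> (forall k, smoothC (Ftc k)) ->
  (forall k, smoothC (Gtc k)) -> (forall k, smoothC (Htc k)) ->
  (forall x t, Fc n x t = 1) -> (forall x t, Hc n x t = 1) ->
  (forall z x t,
     dx (polyz Fc (S n) z) x t
       = - Ci * RtoC (Derive (fun y => u y t) x) * polyz Fc (S n) z x t
         - 2 * Ci * z * polyz Gc n z x t) ->
  (forall z x t,
     dx (polyz Hc (S n) z) x t
       = Ci * RtoC (Derive (fun y => u y t) x) * polyz Hc (S n) z x t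
         + 2 * Ci * z * polyz Gc n z x t) ->
  (forall z x t,
     dx (polyz Gc n z) x t = Ci * (polyz Hc (S n) z x t - polyz Fc (S n) z x t)) ->
  (forall z x t,
     RtoC (Derive (fun s => Derive (fun y => u y s) x) t)
       = - 2 * Ci * dx (polyz Gtc r z) x t
         - 2 * (polyz Htc (S r) z x t - polyz Ftc (S r) z x t)) ->
  (forall z x t,
     dx (polyz Ftc (S r) z) x t
       = - Ci * RtoC (Derive (fun y => u y t) x) * polyz Ftc (S r) z x t
         - 2 * Ci * z * polyz Gtc r z x t) ->
  (forall z x t,
     dx (polyz Htc (S r) z) x t
       = Ci * RtoC (Derive (fun y => u y t) x) * polyz Htc (S r) z x t
         + 2 * Ci * z * polyz Gtc r z x t) ->
  E O = 0 ->
  (forall m, (1 <= m <= 2 * n)%nat -> E m <> 0) ->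
  (forall z x t,
     z * z * (polyz Gc n z x t * polyz Gc n z x t)
       + z * polyz Fc (S n) z x t * polyz Hc (S n) z x t
       = prodroots E (2 * n) z) ->
  (forall z x t,
     dt (polyz Fc (S n) z) x t
       = 2 * (polyz Gc n z x t * polyz Ftc (S r) z x t
              - polyz Gtc r z x t * polyz Fc (S n) z x t)
     /\ z * dt (polyz Gc n z) x t
       = polyz Fc (S n) z x t * polyz Htc (S r) z x t
         - polyz Ftc (S r) z x t * polyz Hc (S n) z x t
     /\ dt (polyz Hc (S n) z) x t
       = 2 * (polyz Gtc r z x t * polyz Hc (S n) z x t
              - polyz Gc n z x t * polyz Htc (S r) z x t))
  /\
  (forall (z : C) (x t : R), z <> 0 ->
     ((dt (polyz Fc (S n) z) x t
         = 2 * (polyz Gc n z x t * polyz Ftc (S r) z x t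
                - polyz Gtc r z x t * polyz Fc (S n) z x t)
       /\ z * dt (polyz Gc n z) x t
         = polyz Fc (S n) z x t * polyz Htc (S r) z x t
           - polyz Ftc (S r) z x t * polyz Hc (S n) z x t
       /\ dt (polyz Hc (S n) z) x t
         = 2 * (polyz Gtc r z x t * polyz Hc (S n) z x t
                - polyz Gc n z x t * polyz Htc (S r) z x t))
      <->
      Vmat (dt (polyz Fc (S n) z) x t) (dt (polyz Gc n z) x t)
           (dt (polyz Hc (S n) z) x t) z
      = comm2 (Vmat (polyz Ftc (S r) z x t) (polyz Gtc r z x t)
                    (polyz Htc (S r) z x t) z)
              (Vmat (polyz Fc (S n) z x t) (polyz Gc n z x t)
                    (polyz Hc (S n) z x t) z))).
Proof.
  intros Hn Hu HFc HGc HHc HFtc HGtc HHtc HFn HHn hFx hHx hGx hu hfx hhx HE0 HEm HR.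
  pose proof (key n r u Fc Gc Hc Ftc Gtc Htc E Hu HFc HGc HHc HFtc HGtc HHtc HFn HHn
    hFx hHx hGx hu hfx hhx HR) as K.
  assert (P1 : forall z x t,
     dt (polyz Fc (S n) z) x t
       = 2 * (polyz Gc n z x t * polyz Ftc (S r) z x t
              - polyz Gtc r z x t * polyz Fc (S n) z x t)
     /\ z * dt (polyz Gc n z) x t
       = polyz Fc (S n) z x t * polyz Htc (S r) z x t
         - polyz Ftc (S r) z x t * polyz Hc (S n) z x t
     /\ dt (polyz Hc (S n) z) x t
       = 2 * (polyz Gtc r z x t * polyz Hc (S n) z x t
              - polyz Gc n z x t * polyz Htc (S r) z x t)).
  { intros z x t. destruct (K t z x) as [A0 [B0 C0]]. unfold Aexp, Bexp, Cexp in *.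
    split; [|split]; apply Csub0; auto. }
  split. exact P1.
  intros z x t Hz. split.
  - intros [E1 [E2 E3]]. unfold Vmat, comm2, M2sub, M2mul. cbn [m11 m12 m21 m22].
    rewrite E1, E3.
    replace (dt (polyz Gc n z) x t) with
      ((polyz Fc (S n) z x t * polyz Htc (S r) z x t - polyz Ftc (S r) z x t * polyz Hc (S n) z x t) / z)
      by (rewrite <- E2; field; auto).
    f_equal; field; auto.
  - intros _. exact (P1 z x t).
Qed.
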